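(* Let $X$ be a space with $e(X)>\omega$ and $Y$ a $T_1$ space with $c(Y)>\omega$. Then $X\times Y$ is not set star Lindelöf.
   Context: $e(X)$ is the supremum of cardinalities of closed discrete subsets of $X$; $c(Y)$ is the supremum of cardinalities of families of pairwise disjoint nonempty open subsets of $Y$. For a family $\mathcal U$ of subsets of $Z$ and $A\subseteq Z$, $st(A,\mathcal U)=\bigcup\{U\in\mathcal U: U\cap A\neq\emptyset\}$. A space $Z$ is set star Lindelöf if for every nonempty $A\subseteq Z$ and every family $\mathcal U$ of open subsets with $\overline A\subseteq\bigcup\mathcal U$ there is a countable $\mathcal V\subseteq\mathcal U$ with $A\subseteq st(\bigcup\mathcal V,\mathcal U)$. *)

(* Defs.v *)
From HB Require Import structures.
From mathcomp Require Import all_boot all_order.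
From mathcomp Require Import all_classical all_reals all_analysis.
Set Implicit Arguments. Unset Strict Implicit. Unset Printing Implicit Defensive.
Local Open Scope classical_set_scope.

Definition closed_discrete {X : topologicalType} (D : set X) : Prop :=
  closed D /\ forall x, D x -> exists U : set X, open U /\ U x /\ U `&` D = [set x].

Definition extent_gt_omega (X : topologicalType) : Prop :=
  exists D : set X, closed_discrete D /\ ~ countable D.

Definition cellularity_gt_omega (Y : topologicalType) : Prop :=
  exists F : set (set Y),
    (forall U, F U -> open U /\ U !=set0) /\
    (forall U V, F U -> F V -> U <> V -> U `&` V = set0) /\
    ~ countable F.

Definition star {Z : Type} (A : set Z) (U : set (set Z)) : set Z :=
  \bigcup_(W in [set W | U W /\ W `&` A !=set0]) W.

Definition set_star_lindelof (Z : topologicalType) : Prop :=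
  forall (A : set Z) (U : set (set Z)),
    A !=set0 ->
    (forall W, U W -> open W) ->
    closure A `<=` \bigcup_(W in U) W ->
    exists V : set (set Z),
      V `<=` U /\ countable V /\ A `<=` star (\bigcup_(W in V) W) U.

(* Main.v *)
Require Import Defs.
From mathcomp Require Import all_boot all_order.
From mathcomp Require Import all_classical all_reals all_analysis.
Set Implicit Arguments. Unset Strict Implicit. Unset Printing Implicit Defensive.
Local Open Scope classical_set_scope.

Lemma openX_helper (X Y : topologicalType) (P : set X) (Q : set Y) :
  open P -> open Q -> open (P `*` Q).
Proof.
move=> oP oQ; rewrite openE => -[x y] [/= Px Qy].
rewrite /interior; exists (P, Q) => //; split => /=.
- by apply: open_nbhs_nbhs; split.
- by apply: open_nbhs_nbhs; split.
Qed.

Section Match.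
Variables (X : Type) (Y : Type) (D : set X) (F : set (set Y)).

Definition pinj (S : set (X * set Y)) :=
  S `<=` D `*` F /\ (forall p q, S p -> S q -> (p.1 = q.1 <-> p.2 = q.2)).

Lemma exists_match : ~ countable D -> ~ countable F ->
  exists M, pinj M /\ ~ countable M.
Proof.
move=> cD cF.
have [|M [PM maxM]] := @Zorn_bigcup _ pinj.
  move=> G GP tot; split.
    by move=> p [S GS Sp]; exact: (GP _ GS).1.
  move=> p q [S GS Sp] [S' GS' S'q].
  have [SS'|S'S] := tot _ _ GS GS'.
    by apply: (GP _ GS').2 => //; exact: SS'.
  by apply: (GP _ GS).2 => //; exact: S'S.
exists M; split => // cM.
have cM1 : countable (fst @` M) by apply: card_le_trans (card_image_le _ _) cM.
have cM2 : countable (snd @` M) by apply: card_le_trans (card_image_le _ _) cM.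
have [x [Dx nx]] : exists x, D x /\ ~ (fst @` M) x.
  apply: contrapT => H; apply: cD; apply: card_le_trans _ cM1.
  apply: subset_card_le => z Dz; apply: contrapT => nz; apply: H; by exists z.
have [U [FU nU]] : exists U, F U /\ ~ (snd @` M) U.
  apply: contrapT => H; apply: cF; apply: card_le_trans _ cM2.
  apply: subset_card_le => z Dz; apply: contrapT => nz; apply: H; by exists z.
apply: (maxM (M `|` [set (x, U)])).
  split; first by move=> p Mp; left.
  move=> /(_ (x, U)) H; have /H Mx : (M `|` [set (x, U)]) (x, U) by right.
  by apply: nx; exists (x, U).
split.
  move=> p [/(PM.1)//|->]; by split.
have nx' : forall p, M p -> p.1 <> x by move=> p Mp e; apply: nx; exists p.
have nU' : forall p, M p -> p.2 <> U by move=> p Mp e; apply: nU; exists p.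
move=> p q [Mp|->] [Mq|->].
- exact: PM.2.
- by split => /= e; [case: (nx' _ Mp e)|case: (nU' _ Mp e)].
- by split => /= e; [case: (nx' _ Mq (esym e))|case: (nU' _ Mq (esym e))].
- by [].
Qed.
End Match.

Theorem proposition3p4 (X Y : topologicalType) :
  extent_gt_omega X -> @accessible_space Y -> cellularity_gt_omega Y ->
  ~ set_star_lindelof (X * Y)%type.
Proof.
move=> [D [[cD dD] ucD]] T1 [F [FoN [Fdis ucF]]] SSL.
have [M [[MDF Minj] ucM]] := exists_match ucD ucF.
have [p0 Mp0] : exists p, M p.
  apply: contrapT => H; apply: ucM.
  have -> : M = set0 by apply/seteqP; split => // p Mp; apply: H; exists p.
  exact: countable0.
have [y0 _] : exists y : Y, True.
  have [_ /FoN [_ [y _]]] := MDF _ Mp0; by exists y.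
have /choice[Onb HO] : forall x, exists U : set X,
   D x -> open U /\ U x /\ U `&` D = [set x].
  move=> x; case: (pselect (D x)) => Dx.
    by have [U HU] := dD x Dx; exists U.
  by exists setT.
have /choice[yf Hy] : forall U : set Y, exists y, U !=set0 -> U y.
  move=> U; case: (pselect (U !=set0)) => [[y Uy]|nU].
    by exists y.
  by exists y0.
have K : forall p q, M p -> M q -> Onb q.1 p.1 -> p = q.
  move=> [a b] [c d] Mp Mq /= Oa.
  have [Da _] := MDF _ Mp; have [Dc _] := MDF _ Mq.
  have [_ [_ E]] := HO c Dc.
  have : (Onb c `&` D) a by split.
  rewrite E => /= ac; subst a.
  by have /= <- := (Minj _ _ Mp Mq).1 erefl.
pose A := (fun p => (p.1, yf p.2)) @` M.
pose U := (fun p => Onb p.1 `*` p.2) @` M.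
have [| |z Hz|V [VU [cV Ast]]] := SSL A U.
- by exists (p0.1, yf p0.2); exists p0.
- move=> _ [p Mp <-]; have [Dp Fp] := MDF _ Mp.
  apply: openX_helper; [exact: (HO _ Dp).1|exact: (FoN _ Fp).1].
- move: z Hz => [x y] Hz.
  have Dx : D x.
    apply: contrapT => nDx.
    have nb : nbhs (x, y) (~` D `*` setT).
      apply: open_nbhs_nbhs; split; last by split.
      apply: openX_helper; [exact: closed_openC | exact: openT].
    have [_ [[p Mp <-] [/= nDp _]]] := Hz _ nb.
    exact: nDp (MDF _ Mp).1.
  have [oO [Ox E]] := HO x Dx.
  have [p [Mp px]] : exists p, M p /\ p.1 = x.
    have nb : nbhs (x, y) (Onb x `*` setT).
      apply: open_nbhs_nbhs; split; last by split.
      apply: openX_helper; [exact: oO | exact: openT].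
    have [_ [[p Mp <-] [/= Op _]]] := Hz _ nb.
    exists p; split => //.
    have : (Onb x `&` D) p.1 by split => //; exact: (MDF _ Mp).1.
    by rewrite E.
  subst x.
  have yE : y = yf p.2.
    apply: contrapT => /eqP ny; have [W [oW /set_mem Wy /set_mem nW]] := T1 _ _ ny.
    have nb : nbhs (p.1, y) (Onb p.1 `*` W).
      apply: open_nbhs_nbhs; split; last by split.
      exact: openX_helper.
    have [_ [[q Mq <-] [/= Oq Wq]]] := Hz _ nb.
    by have qp := K q p Mq Mp Oq; subst q.
  rewrite yE; exists (Onb p.1 `*` p.2); first by exists p.
  split => //=; apply: Hy; exact: (FoN _ (MDF _ Mp).2).2.
have inV : forall p, M p -> V (Onb p.1 `*` p.2).
  move=> p Mp.
  have : A (p.1, yf p.2) by exists p.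
  move=> /Ast [W [[q Mq <-] [w [Ww [W' VW' W'w]]]] Wpt].
  have qp := K p q Mp Mq Wpt.1; subst q.
  have [r Mr eW'] := VU _ VW'; subst W'.
  have e2 : p.2 = r.2.
    apply: contrapT => ne.
    have : (p.2 `&` r.2) w.2 by split; [exact: Ww.2 | exact: W'w.2].
    by rewrite (Fdis _ _ (MDF _ Mp).2 (MDF _ Mr).2 ne).
  have e1 := (Minj _ _ Mp Mr).2 e2.
  by rewrite e1 e2.
move/countable_injP: cV => [f finj]; apply: ucM; apply/countable_injP.
exists (fun p => f (Onb p.1 `*` p.2)) => p q /set_mem Mp /set_mem Mq e.
have eW := finj _ _ (mem_set (inV _ Mp)) (mem_set (inV _ Mq)) e.
apply: (K p q Mp Mq).
have : (Onb p.1 `*` p.2) (p.1, yf p.2).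
  split => /=; first exact: (HO _ (MDF _ Mp).1).2.1.
  apply: Hy; exact: (FoN _ (MDF _ Mp).2).2.
by rewrite eW => -[].
Qed.
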